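(* Let $N\ge2$, $\alpha,\beta>0$, $W:\mathbb{R}^2\to\mathbb{R}$, $W(x)=U(|x|)$ twice continuously differentiable, and let $\hat x\in\mathbb{R}^{2N}$ satisfy: (H1) $\sum_{j\ne i}\nabla W(\hat x_i-\hat x_j)=0$ for all $i$; (H2) the kernel of $G=G(\hat x)$ is exactly three-dimensional, spanned by $w_1=1_N\otimes(1,0)^T$, $w_2=1_N\otimes(0,1)^T$, $w_3=\bigl(I_N\otimes\begin{pmatrix}0&-1\\1&0\end{pmatrix}\bigr)\hat x$; (H3) every non-zero eigenvalue of $G$ has negative real part; (H4) $\hat x_1,\dots,\hat x_N$ are not all collinear. Let $m_0\in\mathbb{R}^2$ with $|m_0|^2=\alpha/\beta$ and define the $4N\times4N$ matrix $$F_B^B=\begin{pmatrix}0_{2N\times2N} & \begin{pmatrix}I_{2N-2}\\ -1_{N-1}^T\otimes I_2\end{pmatrix} & 0_{2N\times2}\\ \lceil G\rceil & -I_{N-1}\otimes 2\beta\, m_0m_0^T & 0_{(2N-2)\times2}\\ 0_{2\times2N}&0_{2\times(2N-2)}&-2\beta\, m_0m_0^T\end{pmatrix}.$$ Then $F_B^B$ has no generalized eigenvector for the eigenvalue $0$, i.e. $\ker (F_B^B)^2=\ker F_B^B$.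
   Context: $G(\hat x)\in\mathbb{R}^{2N\times2N}$ is the Jacobian of the system $\dot x_i=-\sum_{j\ne i}\nabla W(x_i-x_j)$ at $\hat x$: it has $2\times2$ blocks $G_{ii}=-\sum_{j\ne i}\operatorname{Hess}W(\hat x_i-\hat x_j)$ and $G_{ij}=\operatorname{Hess}W(\hat x_i-\hat x_j)$ for $i\ne j$. $\lceil G\rceil$ is the $(2N-2)\times2N$ matrix obtained from $G$ by deleting its last two rows. $1_n$ is the all-ones column vector, $0_{n\times p}$ the zero matrix, $\otimes$ the Kronecker product. ($F_B^B$ is the linearization of the second-order swarming model at a flock, written in mean-velocity coordinates and restricted to mean-velocity-consistent perturbations.) *)

(* Defs.v *)
From HB Require Import structures.
From mathcomp Require Import all_boot all_order all_algebra.
From mathcomp Require Import all_classical all_reals.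
From mathcomp Require Import topology normedtype derive.
From mathcomp Require Import complex mxtens.
Set Implicit Arguments. Unset Strict Implicit. Unset Printing Implicit Defensive.
Import Order.TTheory GRing.Theory Num.Theory.
Import numFieldNormedType.Exports.
Local Open Scope ring_scope.

Section Defs.
Variable R : realType.

Definition e2 (k : 'I_2) : 'rV[R]_2 := delta_mx 0 k.

Definition eucl2 (x : 'rV[R]_2) : R := Num.sqrt (x 0 0 ^+ 2 + x 0 1 ^+ 2).

Definition C2 (W : 'rV[R]_2 -> R) : Prop :=
  (forall x, differentiable W x) /\
  (forall (l : 'I_2) x, differentiable ('D_(e2 l) W) x) /\
  (forall (k l : 'I_2), continuous ('D_(e2 k) ('D_(e2 l) W))).

Definition gradW (W : 'rV[R]_2 -> R) (x : 'rV[R]_2) : 'rV[R]_2 :=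
  \row_k 'D_(e2 k) W x.
Definition hessW (W : 'rV[R]_2 -> R) (x : 'rV[R]_2) : 'M[R]_2 :=
  \matrix_(k, l) 'D_(e2 k) ('D_(e2 l) W) x.

(* a configuration x in R^{2N}, indexed so that x_i = (x_{2i}, x_{2i+1})
   (consistent with the Kronecker product 1_N (x) v) *)
Definition pt {N : nat} (x : 'cV[R]_(N * 2)) (i : 'I_N) : 'rV[R]_2 :=
  \row_a x (mxtens_index (i, a)) 0.

Definition Gmx (W : 'rV[R]_2 -> R) {N : nat} (x : 'cV[R]_(N * 2))
  : 'M[R]_(N * 2) :=
  \matrix_(p, q)
    let i := (mxtens_unindex p).1 in let a := (mxtens_unindex p).2 in
    let j := (mxtens_unindex q).1 in let b := (mxtens_unindex q).2 in
    if i == j then - \sum_(k < N | k != i) hessW W (pt x i - pt x k) a b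
    else hessW W (pt x i - pt x j) a b.

Lemma ceil_proof (N : nat) : (N.-1 * 2 <= N * 2)%N.
Proof. by rewrite leq_mul2r leq_pred orbT. Qed.

Definition ceilmx {N : nat} (G : 'M[R]_(N * 2)) : 'M[R]_(N.-1 * 2, N * 2) :=
  \matrix_(p, q) G (widen_ord (ceil_proof N) p) q.

Definition rot2 : 'M[R]_2 :=
  \matrix_(a, b) (if (a == 0) && (b == 1) then -1
                  else if (a == 1) && (b == 0) then 1 else 0).

Definition ones (n : nat) : 'cV[R]_n := const_mx 1.

Definition w1 (N : nat) : 'cV[R]_(N * 2) := ones N *t (delta_mx 0 0 : 'cV[R]_2).
Definition w2 (N : nat) : 'cV[R]_(N * 2) := ones N *t (delta_mx 1 0 : 'cV[R]_2).
Definition w3 {N : nat} (x : 'cV[R]_(N * 2)) : 'cV[R]_(N * 2) :=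
  ((1%:M : 'M[R]_N) *t rot2) *m x.

Lemma split_proof (N : nat) : (0 < N)%N -> (N.-1 * 2 + 1 * 2 = N * 2)%N.
Proof. by case: N => // n _; rewrite /= mulSn addnC. Qed.

Definition FBB {N : nat} (hN : (0 < N)%N) (G : 'M[R]_(N * 2))
  (beta : R) (m0 : 'cV[R]_2) : 'M[R]_(N * 2 + (N.-1 * 2 + 2)) :=
  let M := (2 * beta) *: (m0 *m m0^T) in
  let T : 'M[R]_(N * 2, N.-1 * 2) :=
    castmx (split_proof hN, erefl)
      (col_mx (1%:M : 'M[R]_(N.-1 * 2))
              ((- (ones N.-1)^T) *t (1%:M : 'M[R]_2))) in
  block_mx (0 : 'M[R]_(N * 2, N * 2))
           (row_mx T (0 : 'M[R]_(N * 2, 2)))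
           (col_mx (ceilmx G) (0 : 'M[R]_(2, N * 2)))
           (block_mx (- ((1%:M : 'M[R]_N.-1) *t M)) (0 : 'M[R]_(N.-1 * 2, 2))
                     (0 : 'M[R]_(2, N.-1 * 2)) (- M)).

End Defs.

(* Main.v *)
Require Import Defs.
From HB Require Import structures.
From mathcomp Require Import all_boot all_order all_algebra.
From mathcomp Require Import all_classical all_reals.
From mathcomp Require Import topology normedtype derive.
From mathcomp Require Import complex mxtens.
From mathcomp Require Import ring lra.
Import Order.TTheory GRing.Theory Num.Theory.
Import numFieldNormedType.Exports.
Local Open Scope ring_scope.
Set Implicit Arguments. Unset Strict Implicit. Unset Printing Implicit Defensive.
Section A.
Variable R : realType.

Lemma derive_negarg (f : 'rV[R]_2 -> R) a v :
  'D_v (fun x => f (- x)) a = 'D_(-v) f (-a).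
Proof.
rewrite /derive; set g1 := fun h => h^-1 *: _; set g2 := fun h => h^-1 *: _.
suff -> : g1 = g2 by [].
by apply: funext => h; rewrite /g1 /g2 /= opprD scalerN.
Qed.

Lemma derive_linN (f : 'rV[R]_2 -> R) a v : differentiable f a ->
  'D_(-v) f a = - 'D_v f a.
Proof. by move=> df; rewrite !deriveE // linearN. Qed.

Lemma eucl2N (x : 'rV[R]_2) : eucl2 (- x) = eucl2 x.
Proof. by rewrite /eucl2 !mxE !sqrrN. Qed.

Lemma DW_odd (W : 'rV[R]_2 -> R) (Weq : (fun x => W (- x)) = W)
  (dW : forall x, differentiable W x) v y :
  'D_v W (- y) = - 'D_v W y.
Proof.
have -> : 'D_v W y = 'D_v (fun x => W (- x)) y by rewrite Weq.
by rewrite derive_negarg derive_linN // opprK.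
Qed.

Lemma deriv_even_of_odd (g : 'rV[R]_2 -> R) (dg : forall x, differentiable g x)
  (godd : (fun x => g (- x)) = - g) u d : 'D_u g (- d) = 'D_u g d.
Proof.
have : 'D_u (fun x => g (- x)) d = 'D_u (- g) d by rewrite godd.
rewrite derive_negarg derive_linN //.
rewrite (deriveN (diff_derivable (dg d))).
by move/oppr_inj.
Qed.

Lemma hess_even (W : 'rV[R]_2 -> R) (Weq : (fun x => W (- x)) = W)
  (hW : C2 W) d : hessW W (- d) = hessW W d.
Proof.
case: hW => dW [ddW _].
apply/matrixP => k l; rewrite [LHS]mxE [RHS]mxE.
apply: deriv_even_of_odd => //.
by apply: funext => x; rewrite (DW_odd Weq dW).
Qed.
End A.
Lemma cont_ball (R : realType) (g : 'rV[R]_2 -> R) (x : 'rV[R]_2) : continuous g ->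
  forall eps : R, 0 < eps -> exists2 d : R, 0 < d &
   forall y : 'rV[R]_2, (forall i j, `|x i j - y i j| < d) -> `|g x - g y| < eps.
Proof.
move=> hc eps eps0.
have := (cvgrPdist_lt _ _).1 (hc x) eps eps0.
move=> /(_ (nbhs_filter x)) /nbhs_ballP [d d0 H]; exists d => // y Hy; apply: H.
rewrite -ball_normE /ball_ /=. rewrite [X in X < _]mx_normrE.
apply: bigmax_lt => // -[i j] _ /=; rewrite !mxE; exact: Hy.
Qed.

Section S.
Variable R : realType.
Lemma line_deriv (f : 'rV[R]_2 -> R) (df : forall x, differentiable f x)
  (y v : 'rV[R]_2) (s : R) :
  is_derive s 1 (fun t : R => f (y + t *: v)) ('D_v f (y + s *: v)).
Proof.
set a := y + s *: v.
have E : (fun h : R => h^-1 *: (((fun t : R => f (y + t *: v)) \o shift s) (h *: 1)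
            - f (y + s *: v)))
       = (fun h : R => h^-1 *: ((f \o shift a) (h *: v) - f a)).
  apply: funext => h /=; congr (_ *: (f _ - _)).
  by rewrite /a [h *: 1]mulr1 scalerDl addrCA addrC.
split.
  by rewrite /derivable E; apply: diff_derivable.
by rewrite /derive E.
Qed.
Local Open Scope classical_set_scope.
Lemma mvt2 (f : 'rV[R]_2 -> R) (df : forall x, differentiable f x)
  (u w : 'rV[R]_2) (ddf : forall x, differentiable ('D_u f) x)
  (x : 'rV[R]_2) (h : R) (h0 : 0 < h) :
  exists xi eta : R, [/\ 0 < xi < h, 0 < eta < h &
    f (x + h *: w + h *: u) - f (x + h *: u) - f (x + h *: w) + f x
      = h * h * 'D_w ('D_u f) (x + xi *: u + eta *: w)].
Proof.
pose phi : R -> R := (fun t : R => f (x + h *: w + t *: u)) - (fun t : R => f (x + t *: u)).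
have dphi (t : R) : is_derive t 1 phi
   ('D_u f (x + h *: w + t *: u) - 'D_u f (x + t *: u)).
  by apply: is_deriveB; apply: line_deriv.
have cphi : {within `[0, h], continuous phi}.
  apply: derivable_within_continuous => t _.
  exact: (@ex_derive _ _ _ _ _ _ _ (dphi t)).
have [xi xiI E1] := MVT h0 (fun t _ => dphi t) cphi.
pose psi := fun t : R => 'D_u f (x + xi *: u + t *: w).
have dpsi (t : R) : is_derive t 1 psi ('D_w ('D_u f) (x + xi *: u + t *: w)).
  exact: line_deriv.
have cpsi : {within `[0, h], continuous psi}.
  apply: derivable_within_continuous => t _.
  exact: (@ex_derive _ _ _ _ _ _ _ (dpsi t)).
have [eta etaI E2] := MVT h0 (fun t _ => dpsi t) cpsi.
exists xi, eta; split.
- by move: xiI; rewrite in_itv.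
- by move: etaI; rewrite in_itv.
have ephi (t : R) : phi t = f (x + h *: w + t *: u) - f (x + t *: u) by [].
move: E1 E2; rewrite !ephi /psi !scale0r !addr0 subr0.
move=> E1 E2; rewrite (addrAC x (h *: w) (xi *: u)) in E1.
have -> : f (x + h *: w + h *: u) - f (x + h *: u) - f (x + h *: w) + f x
   = f (x + h *: w + h *: u) - f (x + h *: u) - (f (x + h *: w) - f x) by ring.
rewrite E1 E2; ring.
Qed.
Lemma entry_bound (x : 'rV[R]_2) k l (a b : R) i j : 0 <= a -> 0 <= b ->
  `|x i j - (x + a *: e2 R k + b *: e2 R l) i j| <= a + b.
Proof.
move=> a0 b0; rewrite !mxE.
set c := ((i == 0) && _)%:R; set d := ((i == 0) && _)%:R.
have -> : x i j - (x i j + a * c + b * d) = - (a * c + b * d) by ring.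
rewrite normrN; apply: (le_trans (ler_normD _ _)); apply: lerD.
- by rewrite normrM (ger0_norm a0) /c; case: (_ && _); rewrite ?normr1 ?normr0 ?mulr1 ?mulr0.
- by rewrite normrM (ger0_norm b0) /d; case: (_ && _); rewrite ?normr1 ?normr0 ?mulr1 ?mulr0.
Qed.

End S.
Section S2.
Variable R : realType.
Lemma close_eq (A B : 'rV[R]_2 -> R) (x : 'rV[R]_2)
  (cA : continuous A) (cB : continuous B)
  (key : forall h : R, 0 < h -> exists p q : 'rV[R]_2,
    [/\ A p = B q, forall i j, `|x i j - p i j| < h + h &
        forall i j, `|x i j - q i j| < h + h]) : A x = B x.
Proof.
apply/eqP; apply/negPn/negP => neq.
set eps := `|A x - B x| / 2.
have eps0 : 0 < eps by rewrite divr_gt0 // normr_gt0 subr_eq0.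
have [dA dA0 HA] := cont_ball x cA eps0.
have [dB dB0 HB] := cont_ball x cB eps0.
set h := Num.min dA dB / 2.
have h0 : 0 < h by rewrite divr_gt0 // lt_min dA0 dB0.
have hh : h + h = Num.min dA dB by rewrite /h; field.
have [p [q [ApBq Hp Hq]]] := key h h0.
have hpA : `|A x - A p| < eps.
  by apply: HA => i j; apply: (lt_le_trans (Hp i j)); rewrite hh ge_min lexx.
have hqB : `|B x - B q| < eps.
  by apply: HB => i j; apply: (lt_le_trans (Hq i j)); rewrite hh ge_min lexx orbT.
have : `|A x - B x| < eps + eps.
  have -> : A x - B x = (A x - A p) + (B q - B x) by rewrite ApBq; ring.
  apply: (le_lt_trans (ler_normD _ _)); apply: ltrD => //.
  by rewrite distrC.
have -> : eps + eps = `|A x - B x| by rewrite /eps; field.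
by rewrite ltxx.
Qed.

Lemma schwarz (f : 'rV[R]_2 -> R) (df : forall x, differentiable f x)
  (ddf : forall l x, differentiable ('D_(e2 R l) f) x)
  (cf : forall k l, continuous ('D_(e2 R k) ('D_(e2 R l) f))) x k l :
  'D_(e2 R k) ('D_(e2 R l) f) x = 'D_(e2 R l) ('D_(e2 R k) f) x.
Proof.
set A := 'D_(e2 R k) ('D_(e2 R l) f); set B := 'D_(e2 R l) ('D_(e2 R k) f).
have key : forall h : R, 0 < h -> exists p q : 'rV[R]_2,
    [/\ A p = B q, forall i j, `|x i j - p i j| < h + h &
        forall i j, `|x i j - q i j| < h + h].
  move=> h h0.
  have [xi [eta [/andP [xi0 xih] /andP [eta0 etah] E1]]] :=
    mvt2 df (e2 R k) (ddf l) x h0.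
  have [xi' [eta' [/andP [xi0' xih'] /andP [eta0' etah'] E2]]] :=
    mvt2 df (e2 R l) (ddf k) x h0.
  exists (x + xi *: e2 R l + eta *: e2 R k), (x + xi' *: e2 R k + eta' *: e2 R l).
  split.
  - have e : h * h * A (x + xi *: e2 R l + eta *: e2 R k) =
             h * h * B (x + xi' *: e2 R k + eta' *: e2 R l).
      apply: (etrans (esym E1)).
      apply: (etrans _ E2).
      rewrite (addrAC x (h *: e2 R l) (h *: e2 R k)).
      have sw : forall a b c d : R, a - b - c + d = a - c - b + d by move=> *; ring.
      by rewrite sw.
    exact: (mulfI (mulf_neq0 (lt0r_neq0 h0) (lt0r_neq0 h0)) e).
  - move=> i j; apply: le_lt_trans (entry_bound x l k i j (ltW xi0) (ltW eta0)) _.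
    exact: ltrD.
  - move=> i j; apply: le_lt_trans (entry_bound x k l i j (ltW xi0') (ltW eta0')) _.
    exact: ltrD.
exact: (close_eq (cf k l) (cf l k) key).
Qed.
End S2.
Section B.
Variable R : realType.

Definition bl {m : nat} (z : 'cV[R]_(m * 2)) (i : 'I_m) (a : 'I_2) : R :=
  z (mxtens_index (i, a)) 0.

Lemma sum_tens m (F : 'I_(m * 2) -> R) :
  \sum_q F q = \sum_(i < m) \sum_(a < 2) F (mxtens_index (i, a)).
Proof.
rewrite pair_big /= (reindex (@mxtens_index m 2)) /=; first by apply: eq_bigr => -[i a].
by exists (@mxtens_unindex m 2) => q _; rewrite (mxtens_indexK, mxtens_unindexK).
Qed.

Lemma sum2 (F : 'I_2 -> R) : \sum_(a < 2) F a = F 0 + F 1.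
Proof. by rewrite big_ord_recr big_ord1 /=; congr (F _ + F _); apply: val_inj. Qed.

Lemma I2P (a : 'I_2) : a = 0 \/ a = 1.
Proof. by case: a => -[|[|]] // ?; [left|right]; apply: val_inj. Qed.

Lemma sum_delta_l m (i : 'I_m) (F : 'I_m -> R) : \sum_j (i == j)%:R * F j = F i.
Proof.
rewrite (bigD1 i) //= eqxx mul1r big1 ?addr0 // => j ji.
by rewrite eq_sym (negbTE ji) mul0r.
Qed.

Lemma bl_mul m p (A : 'M[R]_(m * 2, p * 2)) (z : 'cV[R]_(p * 2)) i a :
  bl (A *m z) i a = \sum_(j < p) \sum_(b < 2) A (mxtens_index (i, a)) (mxtens_index (j, b)) * bl z j b.
Proof. by rewrite /bl mxE sum_tens. Qed.

Lemma bl_add m (y z : 'cV[R]_(m * 2)) i a : bl (y + z) i a = bl y i a + bl z i a.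
Proof. by rewrite /bl mxE. Qed.
Lemma bl_scale m (c : R) (z : 'cV[R]_(m * 2)) i a : bl (c *: z) i a = c * bl z i a.
Proof. by rewrite /bl mxE. Qed.
Lemma bl_opp m (z : 'cV[R]_(m * 2)) i a : bl (- z) i a = - bl z i a.
Proof. by rewrite /bl mxE. Qed.
Lemma bl0 m i a : bl (0 : 'cV[R]_(m * 2)) i a = 0.
Proof. by rewrite /bl mxE. Qed.

Lemma bl_eq0 m (z : 'cV[R]_(m * 2)) : (forall i a, bl z i a = 0) -> z = 0.
Proof.
move=> H; apply/matrixP => p j; rewrite ord1 mxE.
by case: (mxtens_indexP p) => i a; apply: H.
Qed.

Definition dot {m : nat} (w y : 'cV[R]_(m * 2)) : R :=
  \sum_(i < m) \sum_(a < 2) bl w i a * bl y i a.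

Lemma dotE m (w y : 'cV[R]_(m * 2)) : dot w y = (w^T *m y) 0 0.
Proof. by rewrite mxE sum_tens /dot; apply: eq_bigr => i _; apply: eq_bigr => a _; rewrite mxE. Qed.

Lemma dot_G m (G : 'M[R]_(m * 2)) (w z : 'cV[R]_(m * 2)) :
  G^T = G -> G *m w = 0 -> dot w (G *m z) = 0.
Proof.
move=> GT Gw; rewrite dotE mulmxA.
have -> : w^T *m G = (G^T *m w)^T by rewrite trmx_mul trmxK.
by rewrite GT Gw trmx0 mul0mx mxE.
Qed.

Lemma bl_w1 N i a : bl (w1 R N) i a = (a == 0)%:R.
Proof.
rewrite /bl /w1 mxE (mxtens_indexK (i, a)).
by rewrite !mxE /= [Ordinal _]ord1 eqxx andbT mul1r.
Qed.
Lemma bl_w2 N i a : bl (w2 R N) i a = (a == 1)%:R.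
Proof.
rewrite /bl /w2 mxE (mxtens_indexK (i, a)).
by rewrite !mxE /= [Ordinal _]ord1 eqxx andbT mul1r.
Qed.

Lemma bl_w3 N (x : 'cV[R]_(N * 2)) i :
  bl (w3 x) i 0 = - bl x i 1 /\ bl (w3 x) i 1 = bl x i 0.
Proof.
rewrite /w3 !bl_mul.
have E : forall a, \sum_(j < N) \sum_(b < 2)
     (1%:M *t rot2 R) (mxtens_index (i, a)) (mxtens_index (j, b)) * bl x j b
   = \sum_(b < 2) rot2 R a b * bl x i b.
  move=> a.
  rewrite (eq_bigr (fun j => (i == j)%:R * (\sum_(b < 2) rot2 R a b * bl x j b))).
    exact: sum_delta_l.
  move=> j _; rewrite mulr_sumr; apply: eq_bigr => b _.
  by rewrite tensmxE mxE mulrA.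
by rewrite !E !sum2 !mxE /=; split; ring.
Qed.

Lemma colsum m (G : 'M[R]_(m * 2)) (z : 'cV[R]_(m * 2)) a :
  G^T = G -> G *m w1 R m = 0 -> G *m w2 R m = 0 ->
  \sum_(i < m) bl (G *m z) i a = 0.
Proof.
move=> GT G1 G2; case: (I2P a) => ->.
- transitivity (dot (w1 R m) (G *m z)); last exact: dot_G.
  rewrite /dot; apply: eq_bigr => i _.
  by rewrite sum2 !bl_w1 /= mul1r mul0r addr0.
- transitivity (dot (w2 R m) (G *m z)); last exact: dot_G.
  rewrite /dot; apply: eq_bigr => i _.
  by rewrite sum2 !bl_w2 /= mul1r mul0r add0r.
Qed.

End B.
Section C.
Variable R : realType.

Lemma ordS_case n (i : 'I_n.+2) :
  (exists i' : 'I_n.+1, i = widen_ord (leqnSn _) i') \/ i = ord_max.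
Proof.
case: (unliftP ord_max i) => [j ->|->]; last by right.
by left; exists j; apply: val_inj; rewrite /= /bump leqNgt ltn_ord.
Qed.

Lemma sumS n (F : 'I_n.+2 -> R) :
  \sum_(i < n.+2) F i = \sum_(i < n.+1) F (widen_ord (leqnSn _) i) + F ord_max.
Proof. exact: big_ord_recr. Qed.

Lemma castmx_mulmx m m' n (e : m = m') (A : 'M[R]_(m, n)) (y : 'cV[R]_n) :
  castmx (e, erefl) A *m y = castmx (e, erefl) (A *m y).
Proof. by rewrite castmx_mul castmx_id. Qed.

Lemma T_top n (e : (n.+1 * 2 + 1 * 2 = n.+2 * 2)%N) (y : 'cV[R]_(n.+1 * 2)) i' a :
  bl (castmx (e, erefl) (col_mx (1%:M : 'M_(n.+1 * 2))
        ((- (ones R n.+1)^T) *t (1%:M : 'M_2))) *m y) (widen_ord (leqnSn _) i') a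
  = bl y i' a.
Proof.
rewrite castmx_mulmx mul_col_mx mul1mx.
rewrite /bl castmxE /= cast_ord_id.
rewrite (_ : cast_ord _ _ = lshift (1 * 2) (mxtens_index (i', a))); last exact: val_inj.
by rewrite col_mxEu.
Qed.

Lemma T_bot n (e : (n.+1 * 2 + 1 * 2 = n.+2 * 2)%N) (y : 'cV[R]_(n.+1 * 2)) a :
  bl (castmx (e, erefl) (col_mx (1%:M : 'M_(n.+1 * 2))
        ((- (ones R n.+1)^T) *t (1%:M : 'M_2))) *m y) ord_max a
  = - \sum_(i' < n.+1) bl y i' a.
Proof.
rewrite castmx_mulmx mul_col_mx mul1mx.
rewrite /bl castmxE /= cast_ord_id.
rewrite (_ : cast_ord _ _ = rshift (n.+1 * 2) (mxtens_index ((0 : 'I_1), a))); last first.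
  by apply: val_inj; rewrite /= mul0n add0n.
rewrite col_mxEd -/(bl _ _ _) bl_mul -sumrN; apply: eq_bigr => i' _.
rewrite sum2; case: (I2P a) => ->; rewrite !tensmxE !mxE /= /bl; ring.
Qed.

Lemma ceil_bl n (G : 'M[R]_(n.+2 * 2)) (z : 'cV[R]_(n.+2 * 2)) i' a :
  bl (ceilmx G *m z) i' a = bl (G *m z) (widen_ord (leqnSn _) i') a.
Proof.
rewrite /bl !mxE; apply: eq_bigr => q _; rewrite mxE.
by congr (G _ q * _); apply: val_inj.
Qed.

Lemma K_bl m (M : 'M[R]_2) (y : 'cV[R]_(m * 2)) i a :
  bl ((1%:M *t M) *m y) i a = \sum_(b < 2) M a b * bl y i b.
Proof.
rewrite bl_mul.
rewrite (eq_bigr (fun j => (i == j)%:R * (\sum_(b < 2) M a b * bl y j b))).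
  exact: sum_delta_l.
move=> j _; rewrite mulr_sumr; apply: eq_bigr => b _.
by rewrite tensmxE mxE mulrA.
Qed.
End C.
Section D.
Variable R : realType.

Lemma main_alg n (hN : (2 <= n.+2)%N) (G : 'M[R]_(n.+2 * 2)) (xh : 'cV[R]_(n.+2 * 2))
  (beta : R) (m0 : 'cV[R]_2)
  (hb : 0 < beta) (hm : m0 0 0 ^+ 2 + m0 1 0 ^+ 2 != 0)
  (GT : G^T = G) (G1 : G *m w1 R n.+2 = 0) (G2 : G *m w2 R n.+2 = 0) (G3 : G *m w3 xh = 0)
  (Hker : forall u, G *m u = 0 ->
      exists c1 c2 c3 : R, u = c1 *: w1 R n.+2 + c2 *: w2 R n.+2 + c3 *: w3 xh)
  (H4 : ~ exists (p d : 'rV[R]_2), d != 0 /\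
          forall i : 'I_n.+2, exists t : R, pt xh i = p + t *: d) :
  let F := FBB (ltnW hN) G beta m0 in
  forall v : 'cV[R]_(n.+2 * 2 + (n.+2.-1 * 2 + 2)), (F *m F) *m v = 0 -> F *m v = 0.
Proof.
move=> F v; rewrite -mulmxA.
set M := (2 * beta) *: (m0 *m m0^T).
set T := castmx (split_proof (ltnW hN), erefl)
      (col_mx (1%:M : 'M[R]_(n.+2.-1 * 2))
              ((- (ones R n.+2.-1)^T) *t (1%:M : 'M[R]_2))).
set K := (1%:M : 'M[R]_n.+2.-1) *t M.
have Fv : forall (a : 'cV[R]_(n.+2 * 2)) (b : 'cV[R]_(n.+2.-1 * 2)) (c : 'cV[R]_2), F *m col_mx a (col_mx b c) =
   col_mx (T *m b) (col_mx (ceilmx G *m a - K *m b) (- (M *m c))).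
  move=> a b c; rewrite /F /FBB -/M -/T -/K.
  rewrite mul_block_col mul_row_col mul_col_mx !mul_block_col.
  by rewrite !mul0mx !addr0 !add0r add_col_mx ?addr0 ?add0r !mulNmx.
rewrite -[v]vsubmxK -[dsubmx v]vsubmxK !Fv.
set a := usubmx v; set b := usubmx (dsubmx v); set c := dsubmx (dsubmx v).
set y := ceilmx G *m a - K *m b.
move/eqP; rewrite !col_mx_eq0 => /andP [/eqP HTy /andP [/eqP H2 /eqP H3]].
apply/eqP; rewrite !col_mx_eq0.
have y0 : y = 0.
  apply: bl_eq0 => i' k.
  by rewrite -(T_top (split_proof (ltnW hN)) y i' k) HTy bl0.
set s := m0 0 0 ^+ 2 + m0 1 0 ^+ 2.
have Mij : forall i j, M i j = 2 * beta * (m0 i 0 * m0 j 0).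
  by move=> i j; rewrite !mxE big_ord1 ?mxE (_ : ord0 = 0) //; apply: val_inj.
have MM : M *m M = (2 * beta * s) *: M.
  apply/matrixP => i j; rewrite [LHS]mxE sum2 [RHS]mxE !Mij /s; ring.
have Mc0 : M *m c = 0.
  move: H3; rewrite mulmxN opprK mulmxA MM -scalemxAl => /eqP.
  rewrite scaler_eq0 => /orP [|/eqP //].
  by rewrite !mulf_eq0 (negbTE hm) pnatr_eq0 orbF (gt_eqF hb).
rewrite y0 Mc0 oppr0 !eqxx !andbT.
set u := T *m b.
have Gcu : ceilmx G *m u = 0 by move: H2; rewrite y0 mulmx0 subr0.
have wid_bl : forall (z : 'cV[R]_(n.+2 * 2)) i' k,
    bl (ceilmx G *m z) i' k = bl (G *m z) (widen_ord (leqnSn _) i') k.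
  by move=> z i' k; apply: ceil_bl.
have Gu0 : G *m u = 0.
  apply: bl_eq0 => i k; case: (ordS_case i) => [[i' ->]|->].
    by rewrite -wid_bl Gcu bl0.
  have := colsum u k GT G1 G2; rewrite sumS.
  rewrite (eq_bigr (fun _ => 0)) ?big1 ?add0r // => i' _.
  by rewrite -wid_bl Gcu bl0.
have [c1 [c2 [c3 Hu]]] := Hker u Gu0.
have blu0 : forall i, bl u i 0 = c1 - c3 * bl xh i 1.
  move=> i; rewrite Hu !bl_add !bl_scale bl_w1 bl_w2 (bl_w3 xh i).1 /=; ring.
have blu1 : forall i, bl u i 1 = c2 + c3 * bl xh i 0.
  move=> i; rewrite Hu !bl_add !bl_scale bl_w1 bl_w2 (bl_w3 xh i).2 /=; ring.
have ub : forall (i' : 'I_n.+1) k, bl u (widen_ord (leqnSn _) i') k = bl b i' k.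
  by move=> i' k; apply: T_top.
have sumu : forall k, \sum_(i < n.+2) bl u i k = 0.
  move=> k; rewrite sumS (eq_bigr (fun i' => bl b i' k)); last by move=> i' _; apply: ub.
  by rewrite [bl u ord_max k]T_bot subrr.
pose nu i := m0 0 0 * bl u i 0 + m0 1 0 * bl u i 1.
have sumnu : \sum_(i < n.+2) nu i = 0.
  rewrite /nu big_split /= -!mulr_sumr !sumu; ring.
have Gca : ceilmx G *m a = K *m b by apply/eqP; rewrite -subr_eq0 -/y y0.
have ga_wid : forall (i' : 'I_n.+1) k,
    bl (G *m a) (widen_ord (leqnSn _) i') k = 2 * beta * m0 k 0 * nu (widen_ord (leqnSn _) i').
  move=> i' k; rewrite -wid_bl Gca K_bl sum2 !Mij -!ub /nu; ring.
have ga : forall i k, bl (G *m a) i k = 2 * beta * m0 k 0 * nu i.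
  move=> i k; case: (ordS_case i) => [[i' ->]|->]; first exact: ga_wid.
  have sn : \sum_(i < n.+1) nu (widen_ord (leqnSn _) i) = - nu ord_max.
    by move: sumnu; rewrite sumS => /eqP; rewrite addr_eq0 => /eqP.
  have := colsum a k GT G1 G2; rewrite sumS (eq_bigr _ (fun i' _ => ga_wid i' k)).
  rewrite -mulr_sumr sn => /eqP; rewrite addrC addr_eq0 => /eqP ->; ring.
pose phi i := m0 1 0 * bl xh i 0 - m0 0 0 * bl xh i 1.
have dphi : \sum_(i < n.+2) nu i * phi i = 0.
  have := dot_G a GT G3; rewrite /dot.
  under eq_bigr => i _ do rewrite sum2 (bl_w3 xh i).1 (bl_w3 xh i).2 !ga.
  move=> H.
  have : 2 * beta * \sum_(i < n.+2) nu i * phi i = 0.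
    apply: etrans H; rewrite mulr_sumr; apply: eq_bigr => i _; rewrite /phi; ring.
  move/eqP; rewrite !mulf_eq0 pnatr_eq0 (gt_eqF hb) /= => /eqP //.
set kap := m0 0 0 * c1 + m0 1 0 * c2.
have nuE : forall i, nu i = kap + c3 * phi i.
  by move=> i; rewrite /nu blu0 blu1 /phi /kap; ring.
have sq : \sum_(i < n.+2) nu i ^+ 2 = 0.
  transitivity (\sum_(i < n.+2) (kap * nu i + c3 * (nu i * phi i))).
    by apply: eq_bigr => i _; rewrite expr2 {1}nuE; ring.
  by rewrite big_split /= -!mulr_sumr sumnu dphi !mulr0 addr0.
have nu0 : forall i, nu i = 0.
  move=> i; apply/eqP; rewrite -sqrf_eq0; apply/eqP.
  by apply: (psumr_eq0P _ sq) => // j _; apply: sqr_ge0.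
have c30 : c3 = 0.
  case: (eqVneq c3 0) => // c3n; exfalso; apply: H4.
  pose C := - kap / c3.
  have phiC : forall i, phi i = C.
    move=> i; apply: (mulfI c3n); rewrite /C (mulrC c3 (- kap / c3)) divfK //.
    by apply/eqP; rewrite -addr_eq0 addrC -nuE nu0.
  exists (\row_j (if j == 0 then C * m0 1 0 / s else - (C * m0 0 0) / s)), m0^T; split.
    apply/eqP => H0; move: hm.
    have E0 := congr1 (fun A : 'rV[R]_2 => A 0 0) H0.
    have E1 := congr1 (fun A : 'rV[R]_2 => A 0 1) H0.
    rewrite /= !mxE in E0 E1.
    by rewrite /s E0 E1 !expr2 !mul0r addr0 eqxx.
  move=> i; exists ((m0 0 0 * bl xh i 0 + m0 1 0 * bl xh i 1) / s).
  apply/rowP => j; rewrite !mxE; case: (I2P j) => -> /=.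
    by rewrite -(phiC i) /phi /bl /s; field.
  by rewrite -(phiC i) /phi /bl /s; field.
have c10 : c1 = 0.
  have := sumu 0; rewrite (eq_bigr (fun _ => c1)); last first.
    by move=> i _; rewrite blu0 c30 mul0r subr0.
  by rewrite sumr_const card_ord => /eqP; rewrite mulrn_eq0 /= => /eqP.
have c20 : c2 = 0.
  have := sumu 1; rewrite (eq_bigr (fun _ => c2)); last first.
    by move=> i _; rewrite blu1 c30 mul0r addr0.
  by rewrite sumr_const card_ord => /eqP; rewrite mulrn_eq0 /= => /eqP.
by rewrite Hu c10 c20 c30 !scale0r !addr0.
Qed.
End D.

Section E.
Variable R : realType.
Lemma hess_sym (W : 'rV[R]_2 -> R) (hW : C2 W) d a b : hessW W d a b = hessW W d b a.
Proof.
case: hW => dW [ddW cW].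
by rewrite [LHS]mxE [RHS]mxE; apply: schwarz.
Qed.

Lemma Gmx_sym (W : 'rV[R]_2 -> R) (hW : C2 W) (Weq : (fun x => W (- x)) = W)
  N (x : 'cV[R]_(N * 2)) : (Gmx W x)^T = Gmx W x.
Proof.
apply/matrixP => p q; rewrite mxE !mxE.
case: (mxtens_unindex p) => i a; case: (mxtens_unindex q) => j b /=.
case: (eqVneq i j) => [<-|ne].
  by congr (- _); apply: eq_bigr => k _; apply: hess_sym.
by rewrite (hess_sym hW) -opprB hess_even.
Qed.
End E.

Unset Implicit Arguments.
Theorem lemma3 (R : realType) (N : nat) (hN : (2 <= N)%N) (alpha beta : R)
  (halpha : 0 < alpha) (hbeta : 0 < beta)
  (U : R -> R) (W : 'rV[R]_2 -> R)
  (hWU : forall x, W x = U (eucl2 x)) (hW : C2 W)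
  (xh : 'cV[R]_(N * 2))
  (H1 : forall i : 'I_N, \sum_(j < N | j != i) gradW W (pt xh i - pt xh j) = 0)
  (H2span : forall v : 'cV[R]_(N * 2),
     Gmx W xh *m v = 0 <->
     exists c1 c2 c3 : R, v = c1 *: w1 R N + c2 *: w2 R N + c3 *: w3 xh)
  (H2indep : forall c1 c2 c3 : R,
     c1 *: w1 R N + c2 *: w2 R N + c3 *: w3 xh = 0 ->
     [/\ c1 = 0, c2 = 0 & c3 = 0])
  (H3 : forall lam : R[i],
     eigenvalue (map_mx (fun r : R => Complex r 0) (Gmx W xh)) lam -> lam != 0 ->
     complex.Re lam < 0)
  (H4 : ~ exists (p d : 'rV[R]_2), d != 0 /\
          forall i : 'I_N, exists t : R, pt xh i = p + t *: d)
  (m0 : 'cV[R]_2) (hm0 : m0 0 0 ^+ 2 + m0 1 0 ^+ 2 = alpha / beta) :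
  let F := FBB (ltnW hN) (Gmx W xh) beta m0 in
  forall v : 'cV[R]_(N * 2 + (N.-1 * 2 + 2)),
    (F *m F) *m v = 0 <-> F *m v = 0.
Proof.
have Weq : (fun x => W (- x)) = W.
  by apply: funext => x; rewrite !hWU eucl2N.
case: N hN xh H1 H2span H2indep H3 H4 => [|[|n]] // hN xh H1 H2span H2indep H3 H4 F v.
split; last by move=> H; rewrite -mulmxA H mulmx0.
apply: (main_alg (xh := xh)) => //.
- by rewrite hm0 gt_eqF // divr_gt0.
- exact: Gmx_sym.
- by apply/H2span; exists 1, 0, 0; rewrite scale1r !scale0r !addr0.
- by apply/H2span; exists 0, 1, 0; rewrite scale1r !scale0r add0r addr0.
- by apply/H2span; exists 0, 0, 1; rewrite scale1r !scale0r !add0r.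
- by move=> u /H2span.
Qed.
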